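(* Let $p>0$ be fixed. Suppose there exists a choice of $x_{\mathrm{home}}\in\mathbb{Z}^2$ such that $\mathbb{E}[T]=\infty$ for any sequence of instructions. Then $\mathbb{E}[T]=\infty$ (for any sequence of instructions) for any choice of $x_{\mathrm{home}}$ other than the origin.
   Context: A sequence of instructions is an infinite walk $(x_t)_{t\ge 0}$ in $\mathbb{Z}^2$ with $x_0=0$ and $x_{t+1}-x_t\in\{(\pm1,0),(0,\pm1)\}$; it may depend on $x_{\mathrm{home}}$. The guided random walk with error probability $p$ following it is the Markov chain $(X_t)_{t\ge0}$ with $X_0=0$ and independent increments, $X_{t+1}-X_t = x_{t+1}-x_t$ with probability $1-p$, and $X_{t+1}-X_t$ uniformly distributed on $\{(\pm1,0),(0,\pm1)\}$ with probability $p$. $T := \inf\{t\ge0 : X_t = x_{\mathrm{home}}\}$. *)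

(* Defs.v *)
From HB Require Import structures.
From mathcomp Require Import all_boot all_order all_algebra.
From mathcomp Require Import all_classical all_reals.
From mathcomp Require Import ereal topology normedtype sequences.
Set Implicit Arguments. Unset Strict Implicit. Unset Printing Implicit Defensive.
Import Order.TTheory GRing.Theory Num.Theory.
Local Open Scope ring_scope.

Definition pt := (int * int)%type.
Definition origin : pt := (0, 0).

Definition dirv (d : 'I_4) : pt :=
  match val d with
  | 0%N => (1, 0)
  | 1%N => (-1, 0)
  | 2%N => (0, 1)
  | _ => (0, -1)
  end.

Definition is_unit_step (v : pt) : bool :=
  [|| v == (1, 0), v == (-1, 0), v == (0, 1) | v == (0, -1)].

Definition ptsub (a b : pt) : pt := (a.1 - b.1, a.2 - b.2).

(* A sequence of instructions: an infinite nearest-neighbour walk from 0. *)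
Definition is_instr (x : nat -> pt) : Prop :=
  x 0%N = origin /\ forall t, is_unit_step (ptsub (x t.+1) (x t)).

Section Walk.
Variable R : realType.

(* Law of the increment X_{t+1}-X_t of the guided random walk, as a
   distribution on the four unit steps: with prob. 1-p follow the
   instruction, with prob. p a uniform step. *)
Definition step_weight (p : R) (x : nat -> pt) (t : nat) (d : 'I_4) : R :=
  (1 - p) * (dirv d == ptsub (x t.+1) (x t))%:R + p / 4.

Definition pos (t : nat) (s : {ffun 'I_t -> 'I_4}) (k : nat) : pt :=
  (\sum_(i < t | (i < k)%N) (dirv (s i)).1,
   \sum_(i < t | (i < k)%N) (dirv (s i)).2).

(* P(T > t) = P(X_k <> x_home for all 0 <= k <= t), computed from the
   (product) law of the first t independent increments. *)
Definition prob_T_gt (p : R) (x : nat -> pt) (home : pt) (t : nat) : R :=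
  \sum_(s : {ffun 'I_t -> 'I_4})
     (\prod_(i < t) step_weight p x i (s i)) *
     ([forall k : 'I_t.+1, pos s k != home])%:R.

(* E[T] = sum_{t>=0} P(T > t), as an extended real (T valued in N u {oo}). *)
Definition expected_T (p : R) (x : nat -> pt) (home : pt) : \bar R :=
  (\sum_(0 <= t <oo) (prob_T_gt p x home t)%:E)%E.

End Walk.

(* Main.v *)
Require Import Defs.
From HB Require Import structures.
From mathcomp Require Import all_boot all_order all_algebra.
From mathcomp Require Import all_classical all_reals.
From mathcomp Require Import ereal topology normedtype sequences.
Import Order.TTheory GRing.Theory Num.Theory.
Local Open Scope ring_scope.

Section Aux.
Variable R : realType.
Variable p : R.
Hypothesis hp0 : 0 < p.
Hypothesis hp1 : p <= 1.

Lemma sw_ge0 x t d : 0 <= step_weight p x t d.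
Proof.
rewrite /step_weight; apply: addr_ge0.
  by apply: mulr_ge0; [rewrite subr_ge0 | rewrite ler0n].
by apply: divr_ge0; [apply: ltW | ].
Qed.

Lemma sw_gt0 x t d : 0 < step_weight p x t d.
Proof.
rewrite /step_weight; apply: ltr_wpDl.
  by apply: mulr_ge0; [rewrite subr_ge0 | rewrite ler0n].
by apply: divr_gt0.
Qed.

Lemma prob_ge0 x h t : 0 <= prob_T_gt p x h t.
Proof.
rewrite /prob_T_gt; apply: sumr_ge0 => s _; apply: mulr_ge0; last by rewrite ler0n.
by apply: prodr_ge0 => i _; apply: sw_ge0.
Qed.

Definition shiftx (x : nat -> pt) : nat -> pt := fun t => ptsub (x t.+1) (x 1%N).

Lemma shiftx_instr x : is_instr x -> is_instr (shiftx x).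
Proof.
move=> [_ hx]; split; first by rewrite /shiftx /ptsub !subrr.
move=> t; have := hx t.+1; congr is_unit_step.
by rewrite /shiftx /ptsub /=; congr pair; rewrite opprB addrA subrK.
Qed.

Lemma sw_shift x t d : step_weight p x t.+1 d = step_weight p (shiftx x) t d.
Proof.
rewrite /step_weight /shiftx; congr (_ * _ + _); congr (_%:R); congr (_ == _).
by rewrite /ptsub /=; congr pair; rewrite opprB addrA subrK.
Qed.

Definition consf t (d : 'I_4) (s : {ffun 'I_t -> 'I_4}) : {ffun 'I_t.+1 -> 'I_4} :=
  [ffun i => match unlift ord0 i with Some j => s j | None => d end].

Arguments consf {t}.
Lemma consf0 t d (s : {ffun 'I_t -> 'I_4}) : consf d s ord0 = d :> 'I_4.
Proof. by rewrite /consf ffunE unlift_none. Qed.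

Lemma consfS t d (s : {ffun 'I_t -> 'I_4}) (j : 'I_t) : consf d s (lift ord0 j) = s j.
Proof. by rewrite /consf ffunE liftK. Qed.
Arguments consfS {t} d s j.

Lemma consf_inj t d : injective (@consf t d).
Proof.
move=> s1 s2 e; apply/ffunP => j.
by rewrite -(consfS d s1) -(consfS d s2) e.
Qed.

Lemma pos0 t (s : {ffun 'I_t -> 'I_4}) : pos s 0 = origin.
Proof. by rewrite /pos !big_pred0. Qed.

Lemma posS t d (s : {ffun 'I_t -> 'I_4}) k :
  pos (consf d s) k.+1 = ((dirv d).1 + (pos s k).1, (dirv d).2 + (pos s k).2).
Proof.
rewrite /pos /=; congr pair; rewrite big_mkcond big_ord_recl /= consf0;
  congr (_ + _); rewrite [RHS]big_mkcond; apply: eq_bigr => i _ /=;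
  by rewrite consfS ltnS.
Qed.

Lemma ind_step t d (s : {ffun 'I_t -> 'I_4}) h :
  h <> origin ->
  [forall k : 'I_t.+1, pos s k != ptsub h (dirv d)] ->
  [forall k : 'I_t.+2, pos (consf d s) k != h].
Proof.
move=> hne /forallP H; apply/forallP => -[[|k] hk] /=.
  by rewrite pos0; apply/eqP => e; apply: hne.
rewrite posS; apply/negP => /eqP e.
have hk' : (k < t.+1)%N by [].
have := H (Ordinal hk') => /= /negP; apply; apply/eqP.
move: e; case: (pos s k) => a b <-.
by rewrite /ptsub /= !(addrC (dirv d).1) !(addrC (dirv d).2) !addrK.
Qed.

Lemma prob_step x h d t :
  h <> origin ->
  step_weight p x 0 d * prob_T_gt p (shiftx x) (ptsub h (dirv d)) t
  <= prob_T_gt p x h t.+1.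
Proof.
move=> hne; rewrite /prob_T_gt mulr_sumr.
have -> : \sum_(s : {ffun 'I_t -> 'I_4})
    step_weight p x 0 d * ((\prod_(i < t) step_weight p (shiftx x) i (s i)) *
     ([forall k : 'I_t.+1, pos s k != ptsub h (dirv d)])%:R) =
  \sum_(s' in [set consf d s | s : {ffun 'I_t -> 'I_4}])
    step_weight p x 0 d * ((\prod_(i < t) step_weight p (shiftx x) i (s' (lift ord0 i))) *
     ([forall k : 'I_t.+1, pos [ffun i => s' (lift ord0 i)] k != ptsub h (dirv d)])%:R).
  rewrite big_imset /=; last by move=> a b _ _; apply: consf_inj.
  apply: eq_bigr => s _; congr (_ * (_ * _)).
    by apply: eq_bigr => i _; rewrite consfS.
  have -> : [ffun i => consf d s (lift ord0 i)] = s.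
    by apply/ffunP => i; rewrite ffunE consfS.
  by [].
rewrite [X in _ <= X](bigID (fun s => s \in [set consf d s | s : {ffun 'I_t -> 'I_4}])) /=.
rewrite -[X in X <= _]addr0; apply: lerD; last first.
  apply: sumr_ge0 => s _; apply: mulr_ge0; last by rewrite ler0n.
  by apply: prodr_ge0 => i _; apply: sw_ge0.
apply: ler_sum => s' /imsetP [s _ ->].
rewrite big_ord_recl /= consf0 -mulrA; apply: ler_wpM2l; first exact: sw_ge0.
have -> : [ffun i => consf d s (lift ord0 i)] = s.
  by apply/ffunP => i; rewrite ffunE consfS.
have -> : \prod_(i < t) step_weight p (shiftx x) i (consf d s (lift ord0 i)) =
   \prod_(i < t) step_weight p x (lift ord0 i) (consf d s (lift ord0 i)).
  by apply: eq_bigr => i _; rewrite lift0 sw_shift.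
apply: ler_wpM2l; first by apply: prodr_ge0 => i _; apply: sw_ge0.
have [H|H] := boolP [forall k : 'I_t.+1, pos s k != ptsub h (dirv d)].
  by rewrite (@ind_step t d s h hne H) ler_nat leq_b1.
by rewrite ler0n.
Qed.

Definition ptadd (a b : pt) : pt := (a.1 + b.1, a.2 + b.2).

Lemma step_inf h' d :
  (forall z, is_instr z -> expected_T p z h' = +oo%E) ->
  ptadd h' (dirv d) <> origin ->
  forall x, is_instr x -> expected_T p x (ptadd h' (dirv d)) = +oo%E.
Proof.
move=> Hz hne x hx.
have Eh : ptsub (ptadd h' (dirv d)) (dirv d) = h'.
  by rewrite /ptsub /ptadd /= !addrK -surjective_pairing.
set h := ptadd h' (dirv d) in hne Eh *.
have Hc := sw_gt0 x 0 d.
rewrite /expected_T nneseries_recl //; last by move=> k _; rewrite lee_fin prob_ge0.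
rewrite -(@nneseries_addn _ (fun k => (prob_T_gt p x h k)%:E) 1); last by move=> k; rewrite lee_fin prob_ge0.
have -> : (\sum_(i <oo) (prob_T_gt p x h (i + 1))%:E)%E = +oo%E.
  apply/eqP; rewrite eq_le leey /=.
  have := Hz _ (@shiftx_instr x hx); rewrite /expected_T => HQ.
  have <- : ((step_weight p x 0 d)%:E * +oo = +oo)%E.
    by rewrite mulry gtr0_sg // mul1e.
  rewrite -HQ -Eh -nneseriesZl; last by move=> k _; rewrite lee_fin prob_ge0.
  apply: lee_nneseries.
    by move=> k _ _; rewrite lee_fin; apply: mulr_ge0; [apply: ltW | apply: prob_ge0].
  by move=> n _; rewrite lee_fin addn1; apply: prob_step.
by rewrite addey.
Qed.

End Aux.

From mathcomp Require Import ring.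

Definition GG (R : realType) (p : R) (h : pt) :=
  forall x, is_instr x -> expected_T p x h = +oo%E.
Arguments GG {R}.

Lemma G_origin (R : realType) (p : R) : ~ GG p origin.
Proof.
move=> H.
pose x0 : nat -> pt := fun t => (t%:Z, 0).
have hx0 : is_instr x0.
  split => // t; rewrite /is_unit_step /ptsub /x0 /= subrr intS addrK.
  by rewrite eqxx.
have := H x0 hx0; rewrite /expected_T eseries0 // => i _ _.
rewrite /prob_T_gt big1 // => s _.
have -> : [forall k : 'I_i.+1, pos s k != origin] = false.
  by apply/negbTE/negP => /forallP /(_ ord0); rewrite /= pos0 eqxx.
by rewrite mulr0.
Qed.

Section Main.
Variable R : realType.
Variable p : R.
Hypothesis hp0 : 0 < p.
Hypothesis hp1 : p <= 1.

Lemma stepG (a b : int) (d : 'I_4) (c : pt) :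
  GG p (a, b) -> c = ptadd (a, b) (dirv d) -> c <> origin -> GG p c.
Proof. move=> H -> hne; exact: (@step_inf R p hp0 hp1 _ _ H hne). Qed.

Lemma moveX (a b : int) : b != 0 -> forall n : nat,
  GG p (a, b) -> GG p (a + n%:Z, b) /\ GG p (a - n%:Z, b).
Proof.
move=> hb; elim=> [|n IH] H.
  split; [suff -> : (a + Posz 0, b) = (a, b) by [] | suff -> : (a - Posz 0, b) = (a, b) by []];
    by congr pair; first [apply: addr0 | apply: subr0].
have [H1 H2] := IH H; split.
  apply: (@stepG _ _ (@Ordinal 4 0 isT) _ H1).
    by rewrite /ptadd /= addr0 intS; congr pair; ring.
  by case=> _ e; move: hb; rewrite e eqxx.
apply: (@stepG _ _ (@Ordinal 4 1 isT) _ H2).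
  by rewrite /ptadd /= addr0 intS; congr pair; ring.
by case=> _ e; move: hb; rewrite e eqxx.
Qed.

Lemma moveY (a b : int) : a != 0 -> forall n : nat,
  GG p (a, b) -> GG p (a, b + n%:Z) /\ GG p (a, b - n%:Z).
Proof.
move=> hb; elim=> [|n IH] H.
  split; [suff -> : (a, b + Posz 0) = (a, b) by [] | suff -> : (a, b - Posz 0) = (a, b) by []];
    by congr pair; first [apply: addr0 | apply: subr0].
have [H1 H2] := IH H; split.
  apply: (@stepG _ _ (@Ordinal 4 2 isT) _ H1).
    by rewrite /ptadd /= addr0 intS; congr pair; ring.
  by case=> e _; move: hb; rewrite e eqxx.
apply: (@stepG _ _ (@Ordinal 4 3 isT) _ H2).
  by rewrite /ptadd /= addr0 intS; congr pair; ring.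
by case=> e _; move: hb; rewrite e eqxx.
Qed.

Lemma moveX' (a a' b : int) : b != 0 -> GG p (a, b) -> GG p (a', b).
Proof.
move=> hb H; case E: (a' - a) => [n|n].
  have -> : a' = a + n%:Z by rewrite -E; ring.
  by case: (@moveX a b hb n H).
have -> : a' = a - n.+1%:Z by rewrite -NegzE -E; ring.
by case: (@moveX a b hb n.+1 H).
Qed.

Lemma moveY' (a b b' : int) : a != 0 -> GG p (a, b) -> GG p (a, b').
Proof.
move=> hb H; case E: (b' - b) => [n|n].
  have -> : b' = b + n%:Z by rewrite -E; ring.
  by case: (@moveY a b hb n H).
have -> : b' = b - n.+1%:Z by rewrite -NegzE -E; ring.
by case: (@moveY a b hb n.+1 H).
Qed.

Lemma to11 (a b : int) : (a, b) <> origin -> GG p (a, b) -> GG p (1, 1).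
Proof.
move=> hne H; have [hb|hb] := eqVneq b 0.
  subst b; have ha : a != 0 by apply/eqP => e; apply: hne; rewrite e.
  exact: (@moveX' a 1 1 isT (@moveY' a 0 1 ha H)).
exact: (@moveY' 1 b 1 isT (@moveX' a 1 b hb H)).
Qed.

Lemma from11 (a b : int) : (a, b) <> origin -> GG p (1, 1) -> GG p (a, b).
Proof.
move=> hne H; have [hb|hb] := eqVneq b 0.
  subst b; have ha : a != 0 by apply/eqP => e; apply: hne; rewrite e.
  exact: (@moveY' a 1 0 ha (@moveX' 1 a 1 isT H)).
exact: (@moveX' 1 a b hb (@moveY' 1 1 b isT H)).
Qed.

End Main.

Theorem lemma1 (R : realType) (p : R) (hp0 : 0 < p) (hp1 : p <= 1) :
  (exists home0 : pt, forall x : nat -> pt, is_instr x ->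
      expected_T p x home0 = +oo%E) ->
  forall home : pt, home <> origin ->
  forall x : nat -> pt, is_instr x -> expected_T p x home = +oo%E.
Proof.
move=> [[a0 b0] H0] [a b] hne.
have hne0 : (a0, b0) <> origin by move=> e; apply: (@G_origin R p); rewrite -e.
exact: (@from11 R p hp0 hp1 a b hne (@to11 R p hp0 hp1 a0 b0 hne0 H0)).
Qed.
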